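(* Let $A\subseteq\mathbb Z^d$ be a finite set containing $0$ such that the subgroup $\langle A\rangle$ generated by $A$ has rank $d$. If $A$ is individually $C$-incompressible, then $C>d$.
   Context: A finite set $A\subseteq\mathbb Z^d$ with $0\in A$ is individually $C$-incompressible if for every sequence of translates $\{A+u_i\}_{i=1}^I$ with $u_i\notin\bigcup_{j<i}(A+u_j)$ for all $i$, the number of sets $A+u_i$ containing $0$ is at most $C$. *)

(* Defs.v *)
From HB Require Import structures.
From mathcomp Require Import all_boot all_order all_algebra.
Set Implicit Arguments. Unset Strict Implicit. Unset Printing Implicit Defensive.
Import Order.TTheory GRing.Theory Num.Theory.
Local Open Scope ring_scope.

Section Defs.
Variable d : nat.
Notation Zd := 'rV[int]_d.

Definition translate (A : seq Zd) (u : Zd) : seq Zd := [seq a + u | a <- A].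

Definition admissible (A : seq Zd) (us : seq Zd) : Prop :=
  forall i, (i < size us)%N -> forall j, (j < i)%N ->
    nth 0 us i \notin translate A (nth 0 us j).

Definition indiv_incompressible (C : nat) (A : seq Zd) : Prop :=
  forall us : seq Zd, admissible A us ->
    (count (fun u => (0%R : Zd) \in translate A u) us <= C)%N.

Definition in_subgroup (A : seq Zd) (x : Zd) : Prop :=
  exists c : seq int, x = \sum_(i < size A) A`_i *~ c`_i.

Definition Zindep (n : nat) (v : 'I_n -> Zd) : Prop :=
  forall c : 'I_n -> int, \sum_(i < n) v i *~ c i = 0 -> forall i, c i = 0.

Definition subgroup_rank (A : seq Zd) (r : nat) : Prop :=
  (exists v : 'I_r -> Zd, (forall i, in_subgroup A (v i)) /\ Zindep v) /\
  (forall n (v : 'I_n -> Zd), (forall i, in_subgroup A (v i)) -> Zindep v -> (n <= r)%N).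

End Defs.

(* Main.v *)
Require Import Defs.
From HB Require Import structures.
From mathcomp Require Import all_boot all_order all_algebra ring lra.
Import Order.TTheory GRing.Theory Num.Theory.
Set Implicit Arguments. Unset Strict Implicit. Unset Printing Implicit Defensive.
Local Open Scope ring_scope.

Section S.
Variable d : nat.
Definition toQ (v : 'rV[int]_d) : 'rV[rat]_d := \row_i (v 0 i)%:~R.

Lemma toQB u w : toQ (u - w) = toQ u - toQ w.
Proof. by apply/rowP => i; rewrite !mxE rmorphB. Qed.
Lemma toQD u w : toQ (u + w) = toQ u + toQ w.
Proof. by apply/rowP => i; rewrite !mxE rmorphD. Qed.
Lemma toQ0 : toQ 0 = 0.
Proof. by apply/rowP => i; rewrite !mxE. Qed.
Lemma toQ_inj : injective toQ.
Proof.
move=> u w H; apply/rowP => i; move/rowP: H => /(_ i); rewrite !mxE.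
by move/eqP; rewrite eqr_int => /eqP.
Qed.
Lemma toQz v c : toQ (v *~ c) = c%:~R *: toQ v.
Proof. apply/rowP => i; rewrite -scaler_int !mxE intrM; congr (_ * _); by rewrite intz. Qed.
Lemma toQ_sum I (r : seq I) (P : pred I) F :
  toQ (\sum_(i <- r | P i) F i) = \sum_(i <- r | P i) toQ (F i).
Proof. exact: (big_morph toQ toQD toQ0). Qed.

Lemma argmax (T : eqType) (s : seq T) (g : T -> rat) x0 :
  x0 \in s -> exists2 y, y \in s & forall z, z \in s -> g z <= g y.
Proof.
elim: s x0 => [//|a s IH] x0 _.
case: s IH => [|b s] IH.
  by exists a; [rewrite mem_seq1 | move=> z; rewrite mem_seq1 => /eqP ->].
have [y ys ym] := IH b (mem_head _ _).
case: (leP (g a) (g y)) => h.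
  exists y; first by rewrite in_cons ys orbT.
  by move=> z; rewrite in_cons => /orP[/eqP->|/ym].
exists a; first exact: mem_head.
move=> z; rewrite in_cons => /orP[/eqP->//|/ym h'].
exact: le_trans h' (ltW h).
Qed.

Lemma gstep (A xs : seq 'rV[int]_d) (f : 'rV[rat]_d -> rat) x0 :
  x0 \in A -> (forall u w, f (u - w) = f u - f w) ->
  (forall x, x \in xs -> f (toQ x) = -1) ->
  exists2 y, y \in A & (forall z, z \in A -> f (toQ z) <= f (toQ y)) /\
     (forall x, x \in xs -> y - x \notin A).
Proof.
move=> x0A fB fX.
have [y yA ym] := argmax (fun z => f (toQ z)) x0A.
exists y => //; split => // x xX; apply/negP => /ym.
rewrite toQB fB (fX _ xX) opprK.
by rewrite gerDl ler10.
Qed.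

Lemma sum_delta n (P : pred 'I_n) (i : 'I_n) :
  \sum_(j < n | P j) ((i == j)%:R : rat) = (P i)%:R.
Proof.
rewrite big_mkcond /= (bigD1 i) //= eqxx big1 ?addr0.
  by case: (P i).
by move=> j /negPf ji; rewrite eq_sym ji; case: (P j).
Qed.


Definition fb (b : 'rV[rat]_d) (X : seq 'rV[rat]_d) (T : rat) (v : 'rV[rat]_d) : rat :=
  T * coord (in_tuple (b :: X)) ord0 v
  - \sum_(j < (size X).+1 | j != ord0) coord (in_tuple (b :: X)) j v.

Definition f0 (X : seq 'rV[rat]_d) (v : 'rV[rat]_d) : rat :=
  - \sum_(j < size X) coord (in_tuple X) j v.

Lemma fbB b X T u w : fb b X T (u - w) = fb b X T u - fb b X T w.
Proof.
rewrite /fb linearB /=.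
under eq_bigr do rewrite linearB /=.
rewrite sumrB mulrBr.
by ring.
Qed.

Lemma f0B X u w : f0 X (u - w) = f0 X u - f0 X w.
Proof.
rewrite /f0; under eq_bigr do rewrite linearB /=.
by rewrite sumrB; ring.
Qed.

Lemma fb_b b X T : free (b :: X) -> fb b X T b = T.
Proof.
move=> fr; rewrite /fb.
have -> : b = (in_tuple (b :: X))`_(@ord0 (size X)) by [].
rewrite coord_free // eqxx mulr1.
under eq_bigr do rewrite coord_free //.
by rewrite sum_delta /= subr0.
Qed.

Lemma fb_X b X T x : free (b :: X) -> x \in X -> fb b X T x = -1.
Proof.
move=> fr xX; rewrite /fb.
have [i ->] := seq_tnthP xX.
rewrite (tnth_nth 0).
have -> : (in_tuple X)`_i = (in_tuple (b :: X))`_(lift ord0 i) by [].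
rewrite coord_free //.
under eq_bigr do rewrite coord_free //.
by rewrite sum_delta /= mulr0 add0r.
Qed.

Lemma fb_span b X T x : free (b :: X) -> x \in <<X>>%VS -> fb b X T x = fb b X 0 x.
Proof.
move=> fr xX; have xE := @coord_span _ _ _ (in_tuple X) x xX.
rewrite /fb; suff -> : coord (in_tuple (b :: X)) ord0 x = 0 by rewrite !mulr0.
rewrite xE linear_sum big1 // => i _.
rewrite linearZ /=.
have -> : (in_tuple X)`_i = (in_tuple (b :: X))`_(lift ord0 i) by [].
by rewrite coord_free // mulr0.
Qed.

Lemma f0_X X x : free X -> x \in X -> f0 X x = -1.
Proof.
move=> fr xX; rewrite /f0.
have [i ->] := seq_tnthP xX.
rewrite (tnth_nth 0).
under eq_bigr do rewrite coord_free //.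
by rewrite (sum_delta predT).
Qed.


Lemma stepb (A xs : seq 'rV[int]_d) b :
  b \in A -> free (map toQ xs) -> toQ b \notin <<map toQ xs>>%VS ->
  exists2 y, y \in A & (forall x, x \in xs -> y - x \notin A) /\
     toQ y \notin <<map toQ xs>>%VS.
Proof.
move=> bA frX nb.
set X := map toQ xs.
have fr : free (toQ b :: X) by rewrite free_cons nb frX.
have [y0 y0A m0] := argmax (fun z => fb (toQ b) X 0 (toQ z)) bA.
set K := fb (toQ b) X 0 (toQ y0).
have [y yA [ym yx]] := @gstep A xs (fb (toQ b) X (K + 1)) b bA (@fbB _ _ _)
  (fun x xX => fb_X (K + 1) fr (map_f toQ xX)).
exists y => //; split => //; apply/negP => ysp.
have := ym b bA; rewrite fb_b // (fb_span _ fr ysp).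
have := m0 y yA; rewrite -/K => h1 h2.
have : K + 1 <= K by exact: le_trans h2 h1.
by rewrite gerDl ler10.
Qed.

Lemma step0 (A xs : seq 'rV[int]_d) x0 :
  x0 \in A -> free (map toQ xs) ->
  exists2 y, y \in A & (forall x, x \in xs -> y - x \notin A).
Proof.
move=> x0A frX.
have [y yA [_ yx]] := @gstep A xs (f0 (map toQ xs)) x0 x0A (fun u w => f0B _ u w)
  (fun x xX => f0_X frX (map_f toQ xX)).
by exists y.
Qed.

Fixpoint okseq (A : seq 'rV[int]_d) (xs : seq 'rV[int]_d) : Prop :=
  match xs with
  | [::] => True
  | y :: s => (forall x, x \in s -> y - x \notin A) /\ okseq A s
  end.

Lemma build (A : seq 'rV[int]_d) :
  (0 : 'rV[int]_d) \in A -> (d <= \dim <<map toQ A>>%VS)%N ->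
  forall j, (j <= d)%N -> exists xs, [/\ size xs = j, all (mem A) xs, okseq A xs &
     free (map toQ xs)].
Proof.
move=> A0 dimA; elim=> [_|j IH jd].
  by exists [::]; split => //; exact: nil_free.
have [xs [sx ax ox fx]] := IH (ltnW jd).
case: (boolP (has (fun b => toQ b \notin <<map toQ xs>>%VS) A)) => [/hasP[b bA nb] | /hasPn H].
  have [y yA [yx ny]] := stepb bA fx nb.
  exists (y :: xs); split => //=.
  - by rewrite sx.
  - by rewrite yA.
  - by rewrite free_cons ny.
exfalso.
have sub : (<<map toQ A>> <= <<map toQ xs>>)%VS.
  apply/span_subvP => u /mapP[a aA ->].
  by have := H a aA; rewrite negbK.
have := leq_trans (leq_trans dimA (dimvS sub)) (dim_span _).
by rewrite size_map sx leqNgt jd.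
Qed.


Lemma dimA (A : seq 'rV[int]_d) : subgroup_rank A d -> (d <= \dim <<map toQ A>>%VS)%N.
Proof.
case=> [[v [vin vind]] _].
set t := [tuple toQ (v i) | i < d].
have tE : forall i : 'I_d, t`_i = toQ (v i) by move=> j; rewrite nth_mktuple.
have ft : free t.
  apply/freeP => k hk i.
  pose D := fun j => denq (k j).
  pose c := fun i => numq (k i) * \prod_(j | j != i) D j.
  have cE : forall i, (c i)%:~R = (\prod_j D j)%:~R * k i :> rat.
    move=> j; rewrite /c [in RHS](bigD1 j) //= !intrM numqE /D; ring.
  have : toQ (\sum_i v i *~ c i) = toQ 0.
    rewrite toQ_sum toQ0; under eq_bigr do rewrite toQz cE -scalerA -tE.
    by rewrite -scaler_sumr hk scaler0.
  move/toQ_inj/vind => /(_ i) /eqP.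
  have nz : \prod_(j | j != i) D j != 0.
    by apply/prodf_neq0 => j _; exact: denq_neq0.
  rewrite /c mulf_eq0 numq_eq0 (negPf nz) orbF.
  by move/eqP.
apply: (@leq_trans (\dim <<t>>%VS)); first by rewrite (eqP ft) size_tuple.
apply: dimvS; apply/span_subvP => u /tnthP[i ->]; rewrite tnth_mktuple.
have [c ->] := vin i.
rewrite toQ_sum; apply: rpred_sum => k _; rewrite toQz; apply: memvZ.
by apply: memv_span; apply: map_f; exact: mem_nth (ltn_ord k).
Qed.


Lemma ok_nth (A xs : seq 'rV[int]_d) : okseq A xs ->
  forall i j, (i < size xs)%N -> (j < i)%N -> nth 0 xs j - nth 0 xs i \notin A.
Proof.
elim: xs => [//|y s IH] /= [hy hs] [//|i] [|j] /=; rewrite ltnS => hi hj.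
  by apply: hy; exact: mem_nth.
exact: IH.
Qed.

End S.

Unset Implicit Arguments.
Unset Strict Implicit.

Theorem proposition2p7 (d : nat) (A : seq 'rV[int]_d) (C : nat) :
  (0 : 'rV[int]_d) \in A ->
  subgroup_rank A d ->
  indiv_incompressible C A ->
  (d < C)%N.
Proof.
move=> A0 rk inc.
have [xs [sx ax ox fx]] := build A0 (dimA rk) (leqnn d).
have [y yA yx] := step0 A0 fx.
set zs := y :: xs.
have oz : okseq A zs by split.
have az : all (mem A) zs by rewrite /= yA.
set us := map (fun x => - x) zs.
have adm : admissible A us.
  move=> i hi j hj; rewrite size_map in hi.
  rewrite !(nth_map 0) //; last exact: ltn_trans hj hi.
  apply/negP => /mapP[a aA].
  move/eqP; rewrite -subr_eq opprK addrC => /eqP ea.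
  by have := ok_nth oz hi hj; rewrite ea aA.
have := inc us adm.
have -> : count (fun u => (0 : 'rV[int]_d) \in translate A u) us = size us.
  apply/eqP; rewrite -all_count; apply/allP => u /mapP[x xz ->].
  apply/mapP; exists x; first by move/allP: az => /(_ x xz).
  by rewrite subrr.
by rewrite size_map /= sx.
Qed.
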